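(* Let $X$ be a $T_1$ topological space. The following are equivalent: (1) $T''(X)$ is a regular ring; (2) every prime ideal of $T''(X)$ is maximal; (3) for every $f\in T''(X)$ there exists $g\in T''(X)$ with $Z(f)=X\setminus Z(g)$; (4) for each $Z\in Z''[X]$ there exists a dense cozero set $U$ in $X$ such that $Z\cap U$ is clopen in $U$; (5) every ideal of $T''(X)$ is a $z$-ideal of $T''(X)$; (6) every ideal of $T''(X)$ is an intersection of prime ideals of $T''(X)$; (7) every ideal of $T''(X)$ is an intersection of maximal ideals of $T''(X)$; (8) for all $f,g\in T''(X)$, $\langle f,g\rangle=\langle f^2+g^2\rangle$; (9) every principal ideal of $T''(X)$ is generated by an idempotent.
   Context: $C(X)$ is the ring of real-valued continuous functions on $X$; a cozero set is a set $\{x: h(x)\neq 0\}$ with $h\in C(X)$. $T''(X)$ is the ring (under pointwise operations) of all functions $f\colon X\to\mathbb{R}$ for which there is a dense cozero set $U$ of $X$ with $f|_U$ continuous. For $f\colon X\to\mathbb{R}$, $Z(f)=\{x: f(x)=0\}$, and $Z''[X]=\{Z(f): f\in T''(X)\}$. A commutative ring $R$ is regular if for each $a\in R$ there is $x\in R$ with $a=a^2x$. In a commutative ring with unity, $M(a)$ is the intersection of all maximal ideals containing $a$, and an ideal $I$ is a $z$-ideal if $M(a)\subseteq I$ for all $a\in I$. $\langle\cdot\rangle$ denotes the ideal generated. *)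

(* Defs.v *)
From HB Require Import structures.
From mathcomp Require Import all_boot all_order all_algebra.
From mathcomp Require Import all_classical all_reals all_analysis.
Set Implicit Arguments. Unset Strict Implicit. Unset Printing Implicit Defensive.
Import Order.TTheory GRing.Theory Num.Theory.
Import numFieldNormedType.Exports.
Local Open Scope classical_set_scope.
Local Open Scope ring_scope.

Section Tpp.
Variables (R : realType) (X : topologicalType).

Definition cozero (U : set X) : Prop :=
  exists h : X -> R, continuous h /\ U = [set x | h x != 0].

Definition Tpp : set (X -> R) :=
  [set f | exists U : set X, [/\ cozero U, dense U & {within U, continuous f}]].

Definition Zset (f : X -> R) : set X := [set x | f x = 0].

Definition Zpp : set (set X) := [set Z | exists f, Tpp f /\ Z = Zset f].

Definition fmul (f g : X -> R) : X -> R := fun x => f x * g x.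
Definition fadd (f g : X -> R) : X -> R := fun x => f x + g x.
Definition fopp (f : X -> R) : X -> R := fun x => - f x.

Definition ideal (I : set (X -> R)) : Prop :=
  [/\ I `<=` Tpp, I (fun _ => 0),
      (forall f g, I f -> I g -> I (fadd f g)),
      (forall f, I f -> I (fopp f)) &
      (forall f g, Tpp g -> I f -> I (fmul g f))].

Definition prime_ideal (P : set (X -> R)) : Prop :=
  [/\ ideal P, P <> Tpp &
      forall f g, Tpp f -> Tpp g -> P (fmul f g) -> P f \/ P g].

Definition maximal_ideal (M : set (X -> R)) : Prop :=
  [/\ ideal M, M <> Tpp &
      forall J, ideal J -> M `<=` J -> J = M \/ J = Tpp].

Definition gen (S : set (X -> R)) : set (X -> R) :=
  [set h | Tpp h /\ forall I, ideal I -> S `<=` I -> I h].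

Definition regular_ring : Prop :=
  forall a, Tpp a -> exists x, Tpp x /\ a = fmul (fmul a a) x.

Definition Mset (a : X -> R) : set (X -> R) :=
  [set f | Tpp f /\ forall M, maximal_ideal M -> M a -> M f].

Definition z_ideal (I : set (X -> R)) : Prop :=
  ideal I /\ forall a, I a -> Mset a `<=` I.

Definition intersection_of (P : set (X -> R) -> Prop) (I : set (X -> R)) : Prop :=
  exists F : set (set (X -> R)), (forall J, F J -> P J) /\
    I = [set f | Tpp f /\ forall J, F J -> J f].

Definition idempotent_fn (e : X -> R) : Prop := Tpp e /\ fmul e e = e.

Definition clopen_in (U A : set X) : Prop :=
  (exists O, open O /\ A `&` U = O `&` U) /\
  (exists C, closed C /\ A `&` U = C `&` U).

End Tpp.

(* Main.v *)
Require Import Defs.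
From HB Require Import structures.
From mathcomp Require Import all_boot all_order all_algebra.
From mathcomp Require Import all_classical all_reals all_analysis.
From mathcomp Require Import ring lra.
Import Order.TTheory GRing.Theory Num.Theory.
Import numFieldNormedType.Exports.
Local Open Scope classical_set_scope.
Local Open Scope ring_scope.


Section Main.
Variables (R : realType) (X : topologicalType).
Local Notation T := (@Tpp R X).
Local Notation cz := (@cozero R X).

Lemma cozero_open U : cz U -> open U.
Proof.
move=> [h [hc ->]].
have -> : [set x | h x != 0] = h @^-1` [set y | y != 0] by [].
apply: open_comp; last exact: open_neq.
by move=> x _; apply: hc.
Qed.

Lemma TppP f : T f <-> exists U, [/\ cz U, dense U & forall x, U x -> {for x, continuous f}].
Proof.
split=> -[U [cU dU fU]]; exists U; split => //.
- move: fU; rewrite continuous_open_subspace; last exact: cozero_open.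
  by move=> fU x Ux; apply: fU; rewrite inE.
- rewrite continuous_open_subspace; last exact: cozero_open.
  by move=> x; rewrite inE => Ux; apply: fU.
Qed.

Lemma cozeroT : cz setT.
Proof.
exists (fun _ => 1); split; first by move=> x; apply: cvg_cst.
by apply/seteqP; split => x //= _; rewrite oner_neq0.
Qed.

Lemma cozeroI U V : cz U -> cz V -> cz (U `&` V).
Proof.
move=> [h [hc ->]] [k [kc ->]]; exists (fun x => h x * k x); split.
  by move=> x; apply: cvgM; [apply: hc | apply: kc].
by apply/seteqP; split => x /=; rewrite mulf_eq0 negb_or => /andP.
Qed.

Lemma denseT : @dense X setT.
Proof. by move=> O [x Ox] _; exists x. Qed.

Lemma denseI (U V : set X) : open U -> dense U -> dense V -> dense (U `&` V).
Proof.
move=> oU dU dV O O0 oO.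
have [x [Ox Ux]] := dU O O0 oO.
have [y [[Oy Uy] Vy]] := dV (O `&` U) (ex_intro _ x (conj Ox Ux)) (openI oO oU).
by exists y.
Qed.

Lemma T2 f g : T f -> T g -> exists U, [/\ cz U, dense U,
  (forall x, U x -> {for x, continuous f}) & (forall x, U x -> {for x, continuous g})].
Proof.
move=> /TppP [U [cU dU fU]] /TppP [V [cV dV gV]].
exists (U `&` V); split.
- exact: cozeroI.
- apply: denseI => //; exact: cozero_open.
- by move=> x [Ux _]; apply: fU.
- by move=> x [_ Vx]; apply: gV.
Qed.

Lemma T_cst c : T (fun _ => c).
Proof. apply/TppP; exists setT; split; [exact: cozeroT|exact: denseT|].
by move=> x _; apply: cvg_cst. Qed.

Lemma T_add f g : T f -> T g -> T (fadd f g).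
Proof.
move=> Tf Tg; have [U [cU dU fU gU]] := @T2 f g Tf Tg.
apply/TppP; exists U; split => // x Ux.
by apply: cvgD; [apply: fU | apply: gU].
Qed.

Lemma T_mul f g : T f -> T g -> T (fmul f g).
Proof.
move=> Tf Tg; have [U [cU dU fU gU]] := @T2 f g Tf Tg.
apply/TppP; exists U; split => // x Ux.
by apply: cvgM; [apply: fU | apply: gU].
Qed.

Lemma T_opp f : T f -> T (fopp f).
Proof.
move=> /TppP [U [cU dU fU]].
apply/TppP; exists U; split => // x Ux.
by apply: cvgN; apply: fU.
Qed.

Definition rinv (f : X -> R) := fun x => (f x)^-1.

Lemma T_unit h : T h -> (forall x, h x != 0) -> T (rinv h).
Proof.
move=> /TppP [U [cU dU fU]] h0.
apply/TppP; exists U; split => // x Ux.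
by apply: cvgV; [apply: h0 | apply: fU].
Qed.

Lemma near_neq (f : X -> R) p c : {for p, continuous f} -> f p != c ->
  \forall q \near p, f q != c.
Proof.
move=> fc fpc; have H : nbhs (f p) [set y | y != c].
  by apply: open_nbhs_nbhs; split; [exact: open_neq|exact: fpc].
exact: (fc _ H).
Qed.

End Main.
Arguments cozero_open {R X}.
Arguments TppP {R X}.
Arguments cozeroT {R X}.
Arguments cozeroI {R X}.
Arguments denseT {X}.
Arguments denseI {X}.
Arguments T2 {R X f g}.
Arguments T_cst {R X}.
Arguments T_add {R X f g}.
Arguments T_mul {R X f g}.
Arguments T_opp {R X f}.
Arguments T_unit {R X h}.
Arguments near_neq {R X f p c}.
Arguments rinv {R X}.


Section Alg.
Variables (R : realType) (X : topologicalType).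
Local Notation T := (@Tpp R X).
Local Notation one := (fun _ : X => (1 : R)).
Local Notation zero := (fun _ : X => (0 : R)).
Implicit Types (A I J M P S : set (X -> R)) (a f g h : X -> R) (p : X).

Ltac fe := apply: funext => ?; rewrite /fmul /fadd /fopp /=; ring.

Definition pid (a : X -> R) := [set h | exists r, T r /\ h = fmul r a].
Definition padd (A : set (X -> R)) a :=
  [set h | exists m r, [/\ A m, T r & h = fadd m (fmul r a)]].

Lemma ideal_padd A a : ideal A -> T a -> ideal (padd A a).
Proof.
move=> [AT A0 Aadd Aopp Amul] Ta; split.
- move=> h [m [r [Am Tr ->]]]; apply: T_add; first exact: AT.
  exact: T_mul.
- exists zero, zero; split => //; first exact: T_cst. fe.
- move=> f g [m [r [Am Tr ->]]] [m' [r' [Am' Tr' ->]]].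
  exists (fadd m m'), (fadd r r'); split; [exact: Aadd|exact: T_add|fe].
- move=> f [m [r [Am Tr ->]]].
  exists (fopp m), (fopp r); split; [exact: Aopp|exact: T_opp|fe].
- move=> f g Tg [m [r [Am Tr ->]]].
  exists (fmul g m), (fmul g r); split; [exact: Amul|exact: T_mul|fe].
Qed.

Lemma padd_sub A a : ideal A -> A `<=` padd A a.
Proof.
move=> [_ _ _ _ _] m Am; exists m, zero; split => //; first exact: T_cst. fe.
Qed.

Lemma padd_a A a : ideal A -> padd A a a.
Proof.
move=> [_ A0 _ _ _]; exists zero, one; split => //; first exact: T_cst. fe.
Qed.

Lemma ideal_pid a : T a -> ideal (pid a).
Proof.
move=> Ta; split.
- by move=> h [r [Tr ->]]; exact: T_mul.
- exists zero; split; first exact: T_cst. fe.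
- move=> f g [r [Tr ->]] [r' [Tr' ->]]; exists (fadd r r'); split; [exact: T_add|fe].
- move=> f [r [Tr ->]]; exists (fopp r); split; [exact: T_opp|fe].
- move=> f g Tg [r [Tr ->]]; exists (fmul g r); split; [exact: T_mul|fe].
Qed.

Lemma pid_a a : pid a a.
Proof. exists one; split; first exact: T_cst. fe. Qed.

Lemma ideal_gen S : ideal (gen S).
Proof.
split.
- by move=> h [].
- split; first exact: T_cst. by move=> I [].
- move=> f g [Tf Hf] [Tg Hg]; split; first exact: T_add.
  move=> I IdI SI; have [_ _ Iadd _ _] := IdI; apply: Iadd; [exact: Hf|exact: Hg].
- move=> f [Tf Hf]; split; first exact: T_opp.
  move=> I IdI SI; have [_ _ _ Iopp _] := IdI; apply: Iopp; exact: Hf.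
- move=> f g Tg [Tf Hf]; split; first exact: T_mul.
  move=> I IdI SI; have [_ _ _ _ Imul] := IdI; apply: Imul => //; exact: Hf.
Qed.

Lemma gen_in S : S `<=` T -> S `<=` gen S.
Proof. by move=> ST f Sf; split; [exact: ST|move=> I _ SI; exact: SI]. Qed.

Lemma gen_min S I : ideal I -> S `<=` I -> gen S `<=` I.
Proof. by move=> IdI SI f [_ Hf]; exact: Hf. Qed.

Lemma gen1_pid a : T a -> gen [set a] `<=` pid a.
Proof. move=> Ta; apply: gen_min; first exact: ideal_pid. by move=> f ->; exact: pid_a. Qed.

Lemma ideal_one I : ideal I -> I one -> I = T.
Proof.
move=> [IT _ _ _ Imul] I1; apply/seteqP; split => // f Tf.
have -> : f = fmul f one by fe.
exact: Imul.
Qed.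

Lemma ideal_T I : ideal I -> I `<=` T.
Proof. by case. Qed.


Lemma max_prime M : maximal_ideal M -> prime_ideal M.
Proof.
move=> [IdM MT Mmax]; split => // f g Tf Tg Mfg.
have [Mf|Mf] := pselect (M f); first by left.
right.
have [E|E] := Mmax (padd M f) (@ideal_padd M f IdM Tf) (@padd_sub M f IdM).
  by exfalso; apply: Mf; rewrite -E; exact: padd_a.
have : padd M f one by rewrite E; exact: T_cst.
move=> [m [r [Mm Tr E1]]].
have [_ _ Madd _ Mmul] := IdM.
have -> : g = fadd (fmul g m) (fmul r (fmul f g)).
  apply: funext => x; have := congr1 (fun h => h x) E1.
  rewrite /fmul /fadd /= => E2.
  by transitivity (g x * 1); [rewrite mulr1|rewrite E2; ring].
apply: Madd; [exact: Mmul|exact: Mmul].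
Qed.

Definition Mx (p : X) := [set f | T f /\ f p = 0].

Lemma max_Mx p : maximal_ideal (Mx p).
Proof.
have IdM : ideal (Mx p).
  split.
  - by move=> f [].
  - by split; [exact: T_cst|].
  - move=> f g [Tf fp] [Tg gp]; split; [exact: T_add|by rewrite /fadd fp gp addr0].
  - move=> f [Tf fp]; split; [exact: T_opp|by rewrite /fopp fp oppr0].
  - move=> f g Tg [Tf fp]; split; [exact: T_mul|by rewrite /fmul fp mulr0].
split => //.
  move=> E; have : Mx p one by rewrite E; exact: T_cst.
  by move=> [_ /eqP]; rewrite oner_eq0.
move=> J IdJ MJ.
have [JM|] := pselect (J `<=` Mx p).
  by left; apply/seteqP; split.
move=> /existsNP [g /not_implyP [Jg Mg]].
right; have Tg := @ideal_T J IdJ g Jg.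
have gp : g p != 0 by apply/eqP => gp; apply: Mg.
apply/seteqP; split; first exact: ideal_T.
move=> h Th; set c := h p / g p.
have [_ _ Jadd _ Jmul] := IdJ.
have -> : h = fadd (fadd h (fopp (fmul (fun _ => c) g))) (fmul (fun _ => c) g) by fe.
apply: Jadd; last by apply: Jmul => //; exact: T_cst.
apply: MJ; split.
  apply: T_add => //; apply: T_opp; apply: T_mul => //; exact: T_cst.
by rewrite /fadd /fopp /fmul /c divfK // subrr.
Qed.

End Alg.
Arguments ideal_padd {R X A a}.
Arguments padd_sub {R X A}.
Arguments padd_a {R X}.
Arguments ideal_pid {R X a}.
Arguments pid_a {R X}.
Arguments ideal_gen {R X}.
Arguments gen_in {R X}.
Arguments gen_min {R X}.
Arguments gen1_pid {R X a}.
Arguments ideal_one {R X I}.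
Arguments ideal_T {R X I}.
Arguments max_prime {R X M}.
Arguments max_Mx {R X}.
Arguments pid {R X}.
Arguments padd {R X}.
Arguments Mx {R X}.


Section Zorn.
Variables (R : realType) (X : topologicalType).
Local Notation T := (@Tpp R X).
Implicit Types (A I J K M P S : set (X -> R)) (a f g h : X -> R) (p : X).

Lemma prime_avoid K S : ideal K -> (forall a b, S a -> S b -> S (fmul a b)) ->
  S `<=` T -> (exists s, S s) -> (forall f, K f -> ~ S f) ->
  exists P, [/\ prime_ideal P, K `<=` P & forall f, P f -> ~ S f].
Proof.
move=> IdK Smul ST [s0 Ss0] KS.
pose good J := [/\ ideal J, K `<=` J & forall f, J f -> ~ S f].
pose Pz := [set J | J = set0 \/ good J].
have Hne : forall J, Pz J -> forall f, J f -> good J.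
  by move=> J [->|//] f.
have H1 : forall F, F `<=` Pz -> total_on F subset -> Pz (\bigcup_(Y in F) Y).
  move=> F FP Ftot.
  have [E|NE] := pselect (\bigcup_(Y in F) Y = set0); first by left.
  right.
  have /set0P [f0 [J0 FJ0 J0f0]] : \bigcup_(Y in F) Y != set0 by apply/eqP.
  have gJ0 := Hne J0 (FP _ FJ0) f0 J0f0.
  have two : forall f g, (\bigcup_(Y in F) Y) f -> (\bigcup_(Y in F) Y) g ->
      exists J, [/\ F J, J f, J g & good J].
    move=> f g [J1 F1 f1] [J2 F2 g2]; case: (Ftot _ _ F1 F2) => sub.
    - by exists J2; split => //; [exact: sub| exact: (Hne J2 (FP _ F2) g g2)].
    - by exists J1; split => //; [exact: sub| exact: (Hne J1 (FP _ F1) f f1)].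
  have one : forall f, (\bigcup_(Y in F) Y) f -> exists J, [/\ F J, J f & good J].
    move=> f [J1 F1 f1]; exists J1; split => //; exact: (Hne J1 (FP _ F1) f f1).
  split; [split| |].
  - by move=> f /one [J [_ Jf [[JT _ _ _ _] _ _]]]; exact: JT.
  - exists J0 => //; by case: gJ0 => -[].
  - move=> f g /two H /H [J [FJ Jf Jg [[_ _ Jadd _ _] _ _]]]; exists J => //.
    exact: Jadd.
  - move=> f /one [J [FJ Jf [[_ _ _ Jopp _] _ _]]]; exists J => //; exact: Jopp.
  - move=> f g Tg /one [J [FJ Jf [[_ _ _ _ Jmul] _ _]]]; exists J => //; exact: Jmul.
  - by move=> f Kf; exists J0 => //; case: gJ0 => _ KJ _; exact: KJ.
  - by move=> f /one [J [FJ Jf [_ _ JS]]]; exact: JS.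
have [A [PA Amax]] := Zorn_bigcup H1.
have gK : good K by split.
have gA : good A.
  case: PA => // A0; exfalso; apply: (Amax K); last by right.
  rewrite A0; split => // H; have [_ K0 _ _ _] := IdK.
  exact: (H _ K0).
have [IdA KA AS] := gA.
exists A; split => //; split => //.
  by move=> E; apply: (AS s0) => //; rewrite E; exact: ST.
move=> f g Tf Tg Afg.
have key : forall a, T a -> ~ A a -> exists m r, [/\ A m, T r & S (fadd m (fmul r a))].
  move=> a Ta Aa; apply: contrapT => H.
  have P1 : A `<` padd A a.
    split; first exact: padd_sub.
    move=> sub; apply: Aa; apply: sub; exact: padd_a.
  have P2 : Pz (padd A a).
    right; split; first exact: ideal_padd.
      by move=> k /KA; apply: padd_sub.
    move=> k [m [r [Am Tr ->]]] Sk; apply: H; by exists m, r.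
  exact: (Amax _ P1 P2).
have [Af|Af] := pselect (A f); first by left.
have [Ag|Ag] := pselect (A g); first by right.
exfalso.
have [m1 [r1 [Am1 Tr1 S1]]] := key f Tf Af.
have [m2 [r2 [Am2 Tr2 S2]]] := key g Tg Ag.
apply: (AS _ _ (Smul _ _ S1 S2)).
have [AT _ Aadd _ Amul] := IdA.
have -> : fmul (fadd m1 (fmul r1 f)) (fadd m2 (fmul r2 g)) =
  fadd (fadd (fmul (fadd m1 (fmul r1 f)) m2) (fmul (fmul r2 g) m1))
       (fmul (fmul r2 r1) (fmul f g)).
  by apply: funext => x; rewrite /fmul /fadd /=; ring.
apply: (Aadd); first apply: (Aadd).
- apply: (Amul) => //; exact: ST.
- by apply: (Amul) => //; apply: T_mul.
- by apply: (Amul) => //; apply: T_mul.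
Qed.

End Zorn.
Arguments prime_avoid {R X K S}.


Section Impl.
Variables (R : realType) (X : topologicalType).
Local Notation T := (@Tpp R X).
Local Notation one := (fun _ : X => (1 : R)).
Local Notation zero := (fun _ : X => (0 : R)).
Local Notation reg := (@regular_ring R X).
Implicit Types (A I J K M P S : set (X -> R)) (a b e f g h : X -> R) (p : X).

Lemma at_ p {f g} : f = g -> f p = g p.
Proof. by move=> ->. Qed.

Lemma reg_inv : reg <-> forall f, T f -> T (rinv f).
Proof.
split.
- move=> Hr f Tf; have [x [Tx E]] := Hr f Tf.
  have -> : rinv f = fmul f (fmul x x).
    apply: funext => p; have Ep := at_ p E; rewrite /rinv /fmul /= in Ep *.
    have [fp|fp] := eqVneq (f p) 0; first by rewrite fp invr0 mul0r.
    have H1 : f p * x p = 1.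
      have : f p * (f p * x p - 1) = 0 by rewrite mulrBr mulr1 mulrA -Ep subrr.
      by move/eqP; rewrite mulf_eq0 (negPf fp) /= subr_eq0 => /eqP.
    have xp : x p = (f p)^-1 by rewrite -[RHS]mulr1 -H1 mulrA mulVf ?mul1r.
    by rewrite xp; field.
  by apply: T_mul => //; apply: T_mul.
- move=> Hi f Tf; exists (rinv f); split; first exact: Hi.
  apply: funext => p; rewrite /rinv /fmul /=.
  have [fp|fp] := eqVneq (f p) 0; first by rewrite fp !mul0r.
  by field.
Qed.

Lemma T_rinv {f} : reg -> T f -> T (rinv f).
Proof. by move=> /reg_inv H; apply: H. Qed.

Lemma ideal_zero {K} : ideal K -> K zero.
Proof. by case. Qed.

Lemma prime_max {P} : reg -> prime_ideal P -> maximal_ideal P.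
Proof.
move=> Hr [IdP PT Pp]; split => // J IdJ PJ.
have [JP|] := pselect (J `<=` P); first by left; apply/seteqP; split.
move=> /existsNP [a /not_implyP [Ja Pa]]; right.
have Ta := ideal_T IdJ _ Ja; have Ta' := T_rinv Hr Ta.
pose b := fadd one (fopp (fmul a (rinv a))).
have Tb : T b by apply: T_add; [exact: T_cst|apply: T_opp; exact: T_mul].
have E : fmul a b = zero.
  apply: funext => p; rewrite /b /fmul /fadd /fopp /rinv /=.
  have [ap|ap] := eqVneq (a p) 0; first by rewrite ap !mul0r.
  by field.
have := Pp a b Ta Tb; rewrite E => /(_ (ideal_zero IdP)) [//|Pb].
apply: ideal_one => //.
have [_ _ Jadd _ Jmul] := IdJ.
have -> : one = fadd b (fmul (rinv a) a) by apply: funext => p; rewrite /b /fmul /fadd /fopp /=; ring.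
apply: (Jadd); [exact: PJ|exact: Jmul].
Qed.

Definition pw a (n : nat) := fun p => a p ^+ n.

Lemma T_pw a n : T a -> T (pw a n).
Proof.
move=> Ta; elim: n => [|n IH].
  have -> : pw a 0 = one by apply: funext => p; rewrite /pw expr0.
  exact: T_cst.
have -> : pw a n.+1 = fmul a (pw a n) by apply: funext => p; rewrite /pw /fmul exprS.
exact: T_mul.
Qed.

Lemma c21 : (forall P, prime_ideal P -> maximal_ideal P) -> reg.
Proof.
move=> H2 a Ta; apply: contrapT => nreg.
pose S := [set s | exists n r, T r /\ s = fmul (pw a n) (fadd one (fopp (fmul r a)))].
pose K := [set f | f = zero].
have IdK : ideal K.
  split.
  - by move=> f ->; exact: T_cst.
  - by [].
  - by move=> f g -> ->; apply: funext => p; rewrite /fadd addr0.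
  - by move=> f ->; apply: funext => p; rewrite /fopp oppr0.
  - by move=> f g _ ->; apply: funext => p; rewrite /fmul mulr0.
have Smul : forall a1 b1, S a1 -> S b1 -> S (fmul a1 b1).
  move=> _ _ [n [r [Tr ->]]] [m [r' [Tr' ->]]].
  exists (n + m)%N, (fadd (fadd r r') (fopp (fmul (fmul r r') a))); split.
    apply: T_add; first exact: T_add.
    by apply: T_opp; apply: T_mul => //; apply: T_mul.
  by apply: funext => p; rewrite /pw /fmul /fadd /fopp /= exprD; ring.
have ST : S `<=` T.
  move=> _ [n [r [Tr ->]]]; apply: T_mul; first exact: T_pw.
  by apply: T_add; [exact: T_cst|apply: T_opp; exact: T_mul].
have KS : forall f, K f -> ~ S f.
  move=> f -> [n [r [Tr E]]]; apply: nreg; exists r; split => //.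
  apply: funext => p; have Ep := at_ p E; rewrite /pw /fmul /fadd /fopp /= in Ep *.
  have [ap|ap] := eqVneq (a p) 0; first by rewrite ap !mul0r.
  move/eqP: Ep; rewrite eq_sym mulf_eq0 expf_eq0 (negPf ap) andbF /= subr_eq0.
  move=> /eqP H1.
  by transitivity (a p * (r p * a p)); [rewrite -H1 mulr1|ring].
have [P [PrP KP PS]] := prime_avoid IdK Smul ST
  (ex_intro _ _ (ex_intro _ 0%N (ex_intro _ zero (conj (T_cst 0) erefl)))) KS.
have [IdP _ Pmax] := H2 P PrP.
have [E|E] := Pmax (padd P a) (ideal_padd IdP Ta) (padd_sub a IdP).
  have Pa : P a by rewrite -E; exact: padd_a.
  apply: (PS a Pa); exists 1%N, zero; split; first exact: T_cst.
  by apply: funext => p; rewrite /pw /fmul /fadd /fopp /= expr1; ring.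
have : padd P a one by rewrite E; exact: T_cst.
move=> [m [r [Pm Tr Em]]].
apply: (PS m Pm); exists 0%N, r; split => //.
apply: funext => p; have Ep := at_ p Em; rewrite /pw /fmul /fadd /fopp /= in Ep *.
by rewrite expr0 mul1r Ep; ring.
Qed.

Lemma c15 : reg -> forall I, ideal I -> z_ideal I.
Proof.
move=> Hr I IdI; split => // a Ia b [Tb Hb].
have Ta := ideal_T IdI _ Ia.
have [_ _ _ _ Imul] := IdI.
have -> : b = fmul (fmul b (rinv a)) a.
  apply: funext => p; rewrite /fmul /rinv /=.
  have [ap|ap] := eqVneq (a p) 0.
    have [_ bp] := Hb (Mx p) (max_Mx p) (conj Ta ap).
    by rewrite bp !mul0r.
  by field.
apply: Imul => //; apply: T_mul => //; exact: T_rinv.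
Qed.

Lemma c51 : (forall I, ideal I -> z_ideal I) -> reg.
Proof.
move=> H5 f Tf.
have Tff := T_mul Tf Tf.
have [_ Hz] := H5 _ (ideal_pid Tff).
have : pid (fmul f f) f.
  apply: (Hz _ (pid_a _)); split => // M MM Mff.
  have [_ _ Hp] := max_prime MM.
  by case: (Hp f f Tf Tf Mff).
move=> [r [Tr E]]; exists r; split => //.
by apply: (eq_trans E); apply: funext => p; rewrite /fmul; ring.
Qed.

Lemma c17 : reg -> forall I, ideal I -> intersection_of (@maximal_ideal R X) I.
Proof.
move=> Hr I IdI.
exists [set M | maximal_ideal M /\ I `<=` M]; split; first by move=> J [].
apply/seteqP; split.
  by move=> f If; split; [exact: ideal_T IdI _ If|move=> J [_ IJ]; exact: IJ].
move=> h [Th Hh]; apply: contrapT => nIh.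
pose e := fmul h (rinv h).
have Te : T e by apply: T_mul => //; exact: T_rinv.
have he : h = fmul h e.
  apply: funext => p; rewrite /e /fmul /rinv /=.
  have [hp|hp] := eqVneq (h p) 0; first by rewrite hp !mul0r.
  by field.
have [_ _ _ _ Imul] := IdI.
have Smul : forall a1 b1, [set e] a1 -> [set e] b1 -> [set e] (fmul a1 b1).
  move=> a1 b1 -> -> /=; rewrite /e; apply: funext => p; rewrite /fmul /rinv /=.
  have [hp|hp] := eqVneq (h p) 0; first by rewrite hp !mul0r.
  by field.
have ST : [set e] `<=` T by move=> _ ->.
have KS : forall f, I f -> ~ [set e] f.
  by move=> f If Ef; apply: nIh; rewrite he; apply: Imul => //; rewrite -Ef.
have [P [PrP IP PS]] := @prime_avoid R X I [set e] IdI Smul ST (ex_intro _ e erefl) KS.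
have MP := prime_max Hr PrP.
have Ph := Hh P (conj MP IP).
have [[_ _ _ _ Pmul] _ _] := PrP.
apply: (PS e _ erefl); have -> : e = fmul (rinv h) h.
  by apply: funext => p; rewrite /e /fmul mulrC.
by apply: Pmul => //; exact: T_rinv.
Qed.

Lemma c16 : reg -> forall I, ideal I -> intersection_of (@prime_ideal R X) I.
Proof.
move=> Hr I IdI; have [F [FM E]] := c17 Hr _ IdI.
exists F; split => // J FJ; exact: max_prime (FM J FJ).
Qed.

Lemma inter_reg (Q : set (X -> R) -> Prop) :
  (forall I, ideal I -> intersection_of Q I) -> (forall J, Q J -> prime_ideal J) -> reg.
Proof.
move=> H HQ a Ta.
have Taa := T_mul Ta Ta.
have [F [FQ E]] := H _ (ideal_pid Taa).
have Ia := pid_a (fmul a a); rewrite E in Ia; have [_ HF] := Ia.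
have : pid (fmul a a) a.
  rewrite E; split => // J FJ.
  have [_ _ Hp] := HQ J (FQ J FJ).
  by case: (Hp a a Ta Ta (HF J FJ)).
move=> [r [Tr Er]]; exists r; split => //.
by apply: (eq_trans Er); apply: funext => p; rewrite /fmul; ring.
Qed.

Lemma c18 : reg -> forall f g, T f -> T g ->
  gen [set f; g] = gen [set (fun x => f x ^+ 2 + g x ^+ 2)].
Proof.
move=> Hr f g Tf Tg.
set h := (fun x => f x ^+ 2 + g x ^+ 2).
have Th : T h.
  have -> : h = fadd (fmul f f) (fmul g g).
    by apply: funext => p; rewrite /h /fadd /fmul !expr2.
  by apply: T_add; apply: T_mul.
have hz : forall p, h p = 0 -> f p = 0 /\ g p = 0.
  move=> p /eqP; rewrite /h paddr_eq0 ?sqr_ge0 // !sqrf_eq0.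
  by move=> /andP [/eqP -> /eqP ->].
have [GI _ Gadd _ Gmul] := @ideal_gen R X [set h].
have Gh : gen [set h] h by apply: gen_in => // ? ->.
have key : forall k, T k -> (forall p, h p = 0 -> k p = 0) -> gen [set h] k.
  move=> k Tk kz.
  have -> : k = fmul (fmul k (rinv h)) h.
    apply: funext => p; rewrite /fmul /rinv /=.
    have [hp|hp] := eqVneq (h p) 0; first by rewrite (kz p hp) !mul0r.
    by field.
  apply: Gmul => //; apply: T_mul => //; exact: T_rinv.
apply/seteqP; split.
  apply: gen_min; first exact: ideal_gen.
  move=> k [->|->]; apply: key => // p /hz []//.
have [GI2 _ Gadd2 _ Gmul2] := @ideal_gen R X [set f; g].
apply: gen_min; first exact: ideal_gen.
have Gf : gen [set f; g] f by apply: gen_in; [move=> k [->|->]|left].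
have Gg : gen [set f; g] g by apply: gen_in; [move=> k [->|->]|right].
move=> k ->; have -> : h = fadd (fmul f f) (fmul g g).
  by apply: funext => p; rewrite /h /fadd /fmul !expr2.
by apply: Gadd2; apply: Gmul2.
Qed.

Lemma c81 : (forall f g, T f -> T g ->
  gen [set f; g] = gen [set (fun x => f x ^+ 2 + g x ^+ 2)]) -> reg.
Proof.
move=> H8 a Ta.
have E := H8 a zero Ta (T_cst 0).
have : gen [set a; zero] a by apply: gen_in; [move=> k [->|->] //; exact: T_cst|left].
rewrite E => /gen1_pid.
have Th : T (fun x => a x ^+ 2 + (fun _ => 0) x ^+ 2).
  have -> : (fun x => a x ^+ 2 + (fun _ : X => (0:R)) x ^+ 2) = fmul a a.
    by apply: funext => p; rewrite /fmul /=; ring.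
  exact: T_mul.
move=> /(_ Th) [r [Tr Er]]; exists r; split => //.
by apply: (eq_trans Er); apply: funext => p; rewrite /fmul /=; ring.
Qed.

Lemma c19 : reg -> forall f, T f -> exists e, idempotent_fn e /\ gen [set f] = gen [set e].
Proof.
move=> Hr f Tf.
have Tf' := T_rinv Hr Tf.
pose e := fmul f (rinv f).
have Te : T e by exact: T_mul.
exists e; split.
  split => //; apply: funext => p; rewrite /e /fmul /rinv /=.
  have [fp|fp] := eqVneq (f p) 0; first by rewrite fp !mul0r.
  by field.
apply/seteqP; split; apply: gen_min; try exact: ideal_gen.
- have [_ _ _ _ Gmul] := @ideal_gen R X [set e].
  move=> k ->; have -> : f = fmul f e.
    apply: funext => p; rewrite /e /fmul /rinv /=.
    have [fp|fp] := eqVneq (f p) 0; first by rewrite fp !mul0r.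
    by field.
  by apply: Gmul => //; apply: gen_in => // ? ->.
- have [_ _ _ _ Gmul] := @ideal_gen R X [set f].
  move=> k ->; have -> : e = fmul (rinv f) f by apply: funext => p; rewrite /e /fmul mulrC.
  by apply: Gmul => //; apply: gen_in => // ? ->.
Qed.

Lemma c91 : (forall f, T f -> exists e, idempotent_fn e /\ gen [set f] = gen [set e]) -> reg.
Proof.
move=> H9 f Tf.
have [e [[Te Ee] E]] := H9 f Tf.
have : gen [set f] e by rewrite E; apply: gen_in => // ? ->.
move=> /(gen1_pid Tf) [r [Tr Er]].
have : gen [set e] f by rewrite -E; apply: gen_in => // ? ->.
move=> /(gen1_pid Te) [s [Ts Es]].
exists r; split => //; apply: funext => p.
have H1 := at_ p Er; have H2 := at_ p Ee; have H3 := at_ p Es.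
rewrite /fmul /= in H1 H2 H3 *.
have fe : f p * e p = f p by rewrite H3 -mulrA H2.
by rewrite -{1}fe H1; ring.
Qed.

End Impl.
Arguments T_rinv {R X f}.


Section Topo.
Variables (R : realType) (X : topologicalType).
Local Notation T := (@Tpp R X).
Local Notation one := (fun _ : X => (1 : R)).
Local Notation zero := (fun _ : X => (0 : R)).
Local Notation reg := (@regular_ring R X).
Implicit Types (A I J K M P S : set (X -> R)) (a b e f g h : X -> R) (p : X).

Lemma c13 : reg -> forall f, T f -> exists g, T g /\ Zset f = ~` Zset g.
Proof.
move=> Hr f Tf.
exists (fadd one (fopp (fmul f (rinv f)))); split.
  apply: T_add; first exact: T_cst.
  by apply: T_opp; apply: T_mul => //; exact: T_rinv.
apply/seteqP; split => p; rewrite /Zset /fadd /fopp /fmul /rinv /=.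
  move=> ->; rewrite mul0r oppr0 addr0 => /eqP; by rewrite oner_eq0.
move=> H; apply/eqP; apply: contrapT => /negP fp; apply: H.
by rewrite divff // subrr.
Qed.

Lemma c31 : (forall f, T f -> exists g, T g /\ Zset f = ~` Zset g) -> reg.
Proof.
move=> H3; apply/reg_inv => f Tf.
have [g [Tg E]] := H3 f Tf.
have Hp : forall p, (f p = 0) = ~ (g p = 0).
  by move=> p; have := congr1 (fun Y : set X => Y p) E.
have h0 : forall p, fadd f g p != 0.
  move=> p; rewrite /fadd; have [fp|fp] := eqVneq (f p) 0.
    have := Hp p; rewrite fp => /(congr1 (fun P : Prop => P)).
    move=> H; have gp : ~ g p = 0 by rewrite -H.
    by rewrite add0r; apply/eqP.
  have gp : g p = 0.
    apply: contrapT => gp; move/eqP: fp; apply; by rewrite Hp.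
  by rewrite gp addr0.
have Th := T_unit (T_add Tf Tg) h0.
have -> : rinv f = fmul f (fmul (rinv (fadd f g)) (rinv (fadd f g))).
  apply: funext => p; rewrite /fmul /rinv /fadd /=.
  have [fp|fp] := eqVneq (f p) 0; first by rewrite fp invr0 mul0r.
  have gp : g p = 0.
    apply: contrapT => gp; move/eqP: fp; apply; by rewrite Hp.
  by rewrite gp addr0; field.
by apply: T_mul => //; apply: T_mul.
Qed.

Lemma c14 : reg -> forall Z, @Zpp R X Z -> exists U : set X,
  [/\ @cozero R X U, dense U & clopen_in U Z].
Proof.
move=> Hr _ [f [Tf ->]].
have Tf' := T_rinv Hr Tf.
have [U [cU dU fU gU]] := T2 Tf Tf'.
exists U; split => //; split.
- exists (interior (Zset f)); split; first exact: open_interior.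
  apply/seteqP; split => p [Zp Up]; split => //; last exact: interior_subset.
  have ec : {for p, continuous (fun q => f q * rinv f q)}.
    by apply: cvgM; [exact: fU|exact: gU].
  have ep : f p * rinv f p != 1 by rewrite /Zset /= in Zp; rewrite Zp mul0r eq_sym oner_eq0.
  have := near_neq ec ep; apply: filterS => q /= eq.
  rewrite /Zset /=; apply: contrapT => fq; move/eqP: eq; apply.
  by rewrite /rinv divff //; apply/eqP.
- exists (~` interior (~` Zset f)); split.
    by apply: open_closedC; exact: open_interior.
  apply/seteqP; split => p [Zp Up]; split => //.
    by move=> /interior_subset.
  apply: contrapT => fp; apply: Zp.
  have fp' : f p != 0 by apply/eqP.
  have := near_neq (fU p Up) fp'; apply: filterS => q /= /eqP.
  by [].
Qed.

Lemma c41 : (forall Z, @Zpp R X Z -> exists U : set X,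
  [/\ @cozero R X U, dense U & clopen_in U Z]) -> reg.
Proof.
move=> H4; apply/reg_inv => f Tf.
have [U [cU dU HU]] := H4 _ (ex_intro _ f (conj Tf erefl)).
case: HU => -[Op [oO EO]] _.
have /TppP [V [cV dV fV]] := Tf.
apply/TppP; exists (U `&` V); split.
- exact: cozeroI.
- apply: denseI => //; exact: (cozero_open _ cU).
move=> p [Up Vp].
have [fp|fp] := eqVneq (f p) 0.
  have E0 : rinv f p = 0 by rewrite /rinv fp invr0.
  change (rinv f x @[x --> p] --> rinv f p); rewrite E0.
  apply: cvg_near_cst.
  have NO : nbhs p Op.
    apply: open_nbhs_nbhs; split => //.
    have : (Zset f `&` U) p by split.
    by rewrite EO => -[].
  have NU : nbhs p U by apply: open_nbhs_nbhs; split => //; exact: (cozero_open _ cU).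
  apply: filterS (filterI NO NU) => q OUq.
  have : (Zset f `&` U) q by rewrite EO.
  by move=> [fq _]; rewrite /rinv fq invr0.
by apply: cvgV => //; exact: fV.
Qed.

End Topo.

Theorem theorem3p3 (R : realType) (X : topologicalType) (hT1 : @accessible_space X) :
  let T := @Tpp R X in
  let c1 := @regular_ring R X in
  let c2 := forall P, @prime_ideal R X P -> @maximal_ideal R X P in
  let c3 := forall f, T f -> exists g, T g /\ @Zset R X f = ~` @Zset R X g in
  let c4 := forall Z, @Zpp R X Z -> exists U : set X,
              [/\ @cozero R X U, dense U & clopen_in U Z] in
  let c5 := forall I, @ideal R X I -> @z_ideal R X I in
  let c6 := forall I, @ideal R X I -> @intersection_of R X (@prime_ideal R X) I in
  let c7 := forall I, @ideal R X I -> @intersection_of R X (@maximal_ideal R X) I in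
  let c8 := forall f g, T f -> T g ->
              @gen R X [set f; g] = @gen R X [set (fun x => f x ^+ 2 + g x ^+ 2)] in
  let c9 := forall f, T f -> exists e,
              @idempotent_fn R X e /\ @gen R X [set f] = @gen R X [set e] in
  (c1 <-> c2) /\ (c1 <-> c3) /\ (c1 <-> c4) /\ (c1 <-> c5) /\ (c1 <-> c6) /\
  (c1 <-> c7) /\ (c1 <-> c8) /\ (c1 <-> c9).
Proof.
move=> T c1 c2 c3 c4 c5 c6 c7 c8 c9.
split; first by split; [move=> H P; exact: prime_max H|exact: c21].
split; first by split; [exact: c13|exact: c31].
split; first by split; [exact: c14|exact: c41].
split; first by split; [exact: c15|exact: c51].
split.
  split; first exact: c16.
  move=> H; apply: (@inter_reg R X _ H) => J; exact: id.
split.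
  split; first exact: c17.
  move=> H; apply: (@inter_reg R X _ H) => J; exact: max_prime.
split; first by split; [exact: c18|exact: c81].
by split; [exact: c19|exact: c91].
Qed.
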